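(* Let $H_{ij}$, $i=1,\ldots,b$, $j=1,\ldots,s_i$, be $n=\sum_is_i$ null hypotheses with $p$-values $P_{ij}$, where true-null $p$-values are $U(0,1)$ and the rows $(P_{i1},\ldots,P_{is_i})$, $i=1,\ldots,b$, are mutually independent, with arbitrary dependence within each row. Fix $\alpha\in(0,1)$ and $\lambda$ with $(2b+3)^{-2/(b+2)}\le\lambda<1$, and let $\widehat n_0=(n-R(\lambda)+s_{\max})/(1-\lambda)$, where $s_{\max}=\max_is_i$ and $R(\lambda)=\#\{(i,j):P_{ij}\le\lambda\}$. The method that rejects $H_{ij}$ if and only if $P_{ij}\le\alpha/\widehat n_0$ has familywise error rate at most $\alpha$ for every configuration of true and false null hypotheses.
   Context: The familywise error rate is $\Pr(V\ge1)$, where $V$ is the number of rejected true null hypotheses. *)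

(* Defs.v *)
From HB Require Import structures.
From mathcomp Require Import all_boot all_order all_algebra.
From mathcomp Require Import all_classical all_reals all_analysis.
Set Implicit Arguments. Unset Strict Implicit. Unset Printing Implicit Defensive.
Import Order.TTheory GRing.Theory Num.Theory.
Local Open Scope classical_set_scope.
Local Open Scope ring_scope.

(* The sigma-algebra
   generated by row i is generated by the pi-system (containing the whole
   space) of "rectangle" events \bigcap_j [set w | P i j w \in B j] with
   B j Borel; the product rule on these pi-systems is equivalent to the
   mutual independence of the row random vectors (subfamilies are obtained
   by taking B = setT). *)
Definition rows_independent {d} {T : measurableType d} {R : realType}
  (Pr : probability T R) (b : nat) (s : 'I_b -> nat)
  (P : forall i : 'I_b, 'I_(s i) -> T -> R) : Prop :=
  forall B : forall i : 'I_b, 'I_(s i) -> set R,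
    (forall i j, measurable (B i j)) ->
    Pr (\bigcap_(i in [set: 'I_b]) \bigcap_(j in [set: 'I_(s i)])
          (P i j @^-1` B i j)) =
    (\prod_(i < b) Pr (\bigcap_(j in [set: 'I_(s i)]) (P i j @^-1` B i j)))%E.

Definition uniform01 {d} {T : measurableType d} {R : realType}
  (Pr : probability T R) (X : T -> R) : Prop :=
  forall t : R, 0 <= t <= 1 -> Pr [set w | X w <= t] = t%:E.

Definition Rcount {T : Type} {R : realType} (b : nat) (s : 'I_b -> nat)
  (P : forall i : 'I_b, 'I_(s i) -> T -> R) (lam : R) (w : T) : nat :=
  \sum_(i < b) #|[set j : 'I_(s i) | (P i j w <= lam)%R]|.

Definition n0hat {T : Type} {R : realType} (b : nat) (s : 'I_b -> nat)
  (P : forall i : 'I_b, 'I_(s i) -> T -> R) (lam : R) (w : T) : R :=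
  (((\sum_(i < b) s i)%:R - (Rcount P lam w)%:R + (\max_(i < b) s i)%:R)
     / (1 - lam)).

Definition FWER {d} {T : measurableType d} {R : realType}
  (Pr : probability T R) (b : nat) (s : 'I_b -> nat)
  (P : forall i : 'I_b, 'I_(s i) -> T -> R)
  (truenull : forall i : 'I_b, 'I_(s i) -> bool) (alpha lam : R) : \bar R :=
  Pr [set w | exists i : 'I_b, exists j : 'I_(s i),
        truenull i j /\ P i j w <= alpha / n0hat P lam w].

(* Main.v *)
Require Import Defs.
From HB Require Import structures.
From mathcomp Require Import all_boot all_order all_algebra.
From mathcomp Require Import all_classical all_reals all_analysis.
From mathcomp Require Import lra.
Import Order.TTheory GRing.Theory Num.Theory.
Local Open Scope classical_set_scope.
Local Open Scope ring_scope.

Lemma cardE (K : finType) (p : pred K) : #|[set j | p j]| = #|[set j | p j]%SET|.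
Proof. by apply: eq_card => j; rewrite inE /in_mem /= /in_set asboolb. Qed.

Section Basics.
Context d (T : measurableType d) (R : realType) (Pr : probability T R).

Definition pr (A : set T) : R := fine (Pr A).

Lemma prE A : measurable A -> Pr A = (pr A)%:E.
Proof. by move=> mA; rewrite /pr fineK // fin_num_measure. Qed.

Lemma pr_ge0 A : 0 <= pr A.
Proof. by apply: fine_ge0. Qed.

Lemma pr_le1 A : measurable A -> pr A <= 1.
Proof. by move=> mA; rewrite -lee_fin -prE // probability_le1. Qed.

Lemma pr_setT : pr setT = 1.
Proof. by rewrite /pr probability_setT. Qed.

Lemma pr_set0 : pr set0 = 0.
Proof. by rewrite /pr measure0. Qed.

Lemma pr_mono A B : measurable A -> measurable B -> A `<=` B -> pr A <= pr B.
Proof.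
move=> mA mB AB; rewrite -lee_fin -!prE //; apply: le_measure => //; by rewrite inE.
Qed.

Lemma pr_U A B : measurable A -> measurable B -> A `&` B = set0 ->
  pr (A `|` B) = pr A + pr B.
Proof.
move=> mA mB AB; apply: EFin_inj; rewrite EFinD -!prE ?measureU //.
exact: measurableU.
Qed.

Lemma pr_Ule A B : measurable A -> measurable B ->
  pr (A `|` B) <= pr A + pr B.
Proof.
move=> mA mB; rewrite -lee_fin EFinD -!prE //; last exact: measurableU.
exact: measureU2.
Qed.

Lemma bigU_memP (I : eqType) (r : seq I) (phi : pred I) (F : I -> set T) w :
  (\big[setU/set0]_(i <- r | phi i) F i) w <-> exists i, [/\ i \in r, phi i & F i w].
Proof.
elim: r => [|a r IH]; first by rewrite big_nil; split => // -[i []].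
rewrite big_cons; case: ifP => Pa.
  split.
    case => [Fa|/IH [i [ir Pi Fi]]]; first by exists a; rewrite inE eqxx.
    by exists i; rewrite inE ir orbT.
  move=> [i []]; rewrite inE => /orP [/eqP ->|ir] Pi Fi; first by left.
  by right; apply/IH; exists i.
split.
  by move=> /IH [i [ir Pi Fi]]; exists i; rewrite inE ir orbT.
move=> [i []]; rewrite inE => /orP [/eqP ->|ir] Pi Fi; first by rewrite Pi in Pa.
by apply/IH; exists i.
Qed.

Lemma bigU_meas (I : Type) (r : seq I) (phi : pred I) (F : I -> set T) :
  (forall i, measurable (F i)) -> measurable (\big[setU/set0]_(i <- r | phi i) F i).
Proof. by move=> mF; apply: bigsetU_measurable => i _; exact: mF. Qed.

Lemma pr_bigU_le (I : Type) (r : seq I) (phi : pred I) (F : I -> set T) :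
  (forall i, measurable (F i)) ->
  pr (\big[setU/set0]_(i <- r | phi i) F i) <= \sum_(i <- r | phi i) pr (F i).
Proof.
move=> mF; elim: r => [|a r IH]; first by rewrite !big_nil pr_set0.
rewrite !big_cons; case: ifP => // _.
have := pr_Ule _ _ (mF a) (bigU_meas _ r phi F mF).
move=> H; apply: (le_trans H).
by rewrite lerD2l.
Qed.

Lemma pr_bigU_eq (I : eqType) (r : seq I) (phi : pred I) (F : I -> set T) :
  uniq r -> (forall i, measurable (F i)) ->
  (forall i j, i != j -> F i `&` F j = set0) ->
  pr (\big[setU/set0]_(i <- r | phi i) F i) = \sum_(i <- r | phi i) pr (F i).
Proof.
move=> + mF dF; elim: r => [|a r IH]; first by rewrite !big_nil pr_set0.
move=> /= /andP [ar ur]; rewrite !big_cons; case: ifP => _; last exact: IH.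
rewrite pr_U ?IH //; first exact: bigU_meas.
apply/seteqP; split => // w [Faw /bigU_memP [i [ir _ Fiw]]].
have ai : a != i by apply: contraNneq ar => ->.
by rewrite -(dF a i ai); split.
Qed.

Lemma decomp (K : finType) (f : T -> K) (E : set T) (phi : pred K) :
  measurable E -> (forall k, measurable (f @^-1` [set k])) ->
  pr (E `&` f @^-1` [set k | phi k]) = \sum_(k | phi k) pr (E `&` f @^-1` [set k]).
Proof.
move=> mE mf.
have -> : E `&` f @^-1` [set k | phi k] =
    \big[setU/set0]_(k <- index_enum K | phi k) (E `&` f @^-1` [set k]).
  apply/seteqP; split => w.
    by move=> [Ew /= Pw]; apply/bigU_memP; exists (f w); rewrite mem_index_enum.
  by move=> /bigU_memP [k [_ Pk [Ew /= fw]]]; split => //=; rewrite fw.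
apply: pr_bigU_eq; first exact: index_enum_uniq.
  by move=> k; apply: measurableI.
move=> k l kl; apply/seteqP; split => // w [[_ /= fk] [_ /= fl]].
by move: kl; rewrite -fk -fl eqxx.
Qed.

End Basics.
Arguments pr {d T R} Pr A.

Arguments pr_mono {d T R} Pr {A B}.
Arguments pr_bigU_le {d T R} Pr {I} r phi {F}.

Section Model.
Context d (T : measurableType d) (R : realType) (Pr : probability T R).
Context (b : nat) (s : 'I_b -> nat) (P : forall i : 'I_b, 'I_(s i) -> T -> R).
Hypothesis mP : forall i j, measurable_fun [set: T] (P i j).
Hypothesis indep : rows_independent Pr P.

Local Notation pr := (pr Pr).
Local Notation fam := (forall k : 'I_b, 'I_(s k) -> set R).

Definition rowrect k (X : 'I_(s k) -> set R) :=
  \bigcap_(j in [set: 'I_(s k)]) (P k j @^-1` X j).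
Definition rect (X : fam) := \bigcap_(k in [set: 'I_b]) rowrect k (X k).

Lemma rowrectP k X w : rowrect k X w <-> forall j, X j (P k j w).
Proof. by split => [H j|H j _]; [exact: H|exact: H]. Qed.

Lemma rectP X w : rect X w <-> forall k j, X k j (P k j w).
Proof.
split => [H k j|H k _]; first by have /rowrectP := H k I; apply.
by apply/rowrectP => j; exact: H.
Qed.

Lemma preim_meas k j (A : set R) : measurable A -> measurable (P k j @^-1` A).
Proof. by move=> mA; rewrite -[X in measurable X]setTI; exact: mP. Qed.

Lemma rowrect_meas k X : (forall j, measurable (X j)) -> measurable (rowrect k X).
Proof.
move=> mX; apply: fin_bigcap_measurable; first exact: finite_finset.
by move=> j _; exact: preim_meas.
Qed.

Lemma rect_meas X : (forall k j, measurable (X k j)) -> measurable (rect X).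
Proof.
move=> mX; apply: fin_bigcap_measurable; first exact: finite_finset.
by move=> k _; exact: rowrect_meas.
Qed.

Lemma rect_prod X : (forall k j, measurable (X k j)) ->
  Pr (rect X) = (\prod_(k < b) Pr (rowrect k (X k)))%E.
Proof. by move=> mX; exact: indep. Qed.

Definition allT : fam := fun k j => [set: R].
Definition mix i (X Y : fam) : fam := fun k => if k == i then X k else Y k.

Lemma rowrectT k : rowrect k (allT k) = setT.
Proof. by apply/seteqP; split => // w _; apply/rowrectP. Qed.

Lemma pr_rowrect k X : (forall j, measurable (X j)) ->
  Pr (rowrect k X) = (pr (rowrect k X))%:E.
Proof. by move=> mX; rewrite prE //; exact: rowrect_meas. Qed.

Lemma indep_mix i X Y : (forall k j, measurable (X k j)) ->
  (forall k j, measurable (Y k j)) ->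
  pr (rect (mix i X Y)) = pr (rowrect i (X i)) * pr (rect (mix i allT Y)).
Proof.
move=> mX mY.
have mM Z : (forall k j, measurable (Z k j)) -> forall k j, measurable (mix i Z Y k j).
  by move=> mZ k j; rewrite /mix; case: ifP.
have mT : forall k j, measurable (allT k j) by move=> *; exact: measurableT.
apply: EFin_inj; rewrite EFinM -!prE; [| by apply: rect_meas; apply: mM
  | exact: rowrect_meas | by apply: rect_meas; apply: mM].
rewrite (rect_prod _ (mM X mX)) (rect_prod _ (mM allT mT)).
rewrite (bigD1 i) // [X in (_ * X)%E](bigD1 i) // {1 3}/mix eqxx rowrectT probability_setT /=.
rewrite mul1e; congr (_ * _)%E.
by apply: eq_bigr => k /negbTE kn; rewrite /mix kn.
Qed.

Variable lam : R.

Definition BB := {dffun forall k : 'I_b, {ffun 'I_(s k) -> bool}}.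
Definition betaw (w : T) : BB := [ffun k => [ffun j => lam < P k j w]].
Definition atomfam (be : BB) : fam := fun k j =>
  if be k j then `]lam, +oo[%classic else `]-oo, lam]%classic.

Lemma atomfam_meas be k j : measurable (atomfam be k j).
Proof. by rewrite /atomfam; case: ifP => _; exact: measurable_itv. Qed.

Lemma atomfamP be k j x : atomfam be k j x <-> (lam < x) = be k j.
Proof.
rewrite /atomfam; case: (be k j) => /=; rewrite in_itv /= ?andbT; first by split => [->|->].
by rewrite ltNge; split => [->|/negbFE].
Qed.

Lemma fiber_betaw be : betaw @^-1` [set be] = rect (atomfam be).
Proof.
apply/seteqP; split => w.
  by move=> /= <-; apply/rectP => k j; apply/atomfamP; rewrite !ffunE.
move=> /rectP H; apply/ffunP => k; apply/ffunP => j; rewrite !ffunE.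
exact/atomfamP/H.
Qed.

Lemma fiber_betaw_meas be : measurable (betaw @^-1` [set be]).
Proof. by rewrite fiber_betaw; apply: rect_meas => k j; exact: atomfam_meas. Qed.

Definition projf i (be : BB) : BB :=
  [ffun k => if k == i then [ffun => false] else be k].

Lemma fiber_proj i (g : BB) :
  (projf i \o betaw) @^-1` [set g] =
  if g i == [ffun => false] then rect (mix i allT (atomfam g)) else set0.
Proof.
case: ifP => gi; apply/seteqP; split => w //=.
- move=> <-; apply/rectP => k j; rewrite /mix; case: ifP => // ki.
  by apply/atomfamP; rewrite /projf !ffunE ki !ffunE.
- move=> /rectP H; apply/ffunP => k; rewrite /projf ffunE.
  case: ifP => [/eqP ->|ki]; first by rewrite (eqP gi).
  apply/ffunP => j; rewrite !ffunE; apply/atomfamP.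
  by have := H k j; rewrite /mix ki.
- by move=> gE; move: gi; rewrite -gE /projf ffunE eqxx eqxx.
Qed.

Lemma fiber_proj_meas i g : measurable ((projf i \o betaw) @^-1` [set g]).
Proof.
rewrite fiber_proj; case: ifP => _ //; apply: rect_meas => k j.
rewrite /mix; case: ifP => _; [exact: measurableT | exact: atomfam_meas].
Qed.

Lemma indep_fiber i X g : (forall k j, measurable (X k j)) ->
  pr (rowrect i (X i) `&` (projf i \o betaw) @^-1` [set g]) =
  pr (rowrect i (X i)) * pr ((projf i \o betaw) @^-1` [set g]).
Proof.
move=> mX; rewrite fiber_proj; case: ifP => _; last by rewrite setI0 pr_set0 mulr0.
have -> : rowrect i (X i) `&` rect (mix i allT (atomfam g)) = rect (mix i X (atomfam g)).
  apply/seteqP; split => w.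
    move=> [/rowrectP Hi /rectP H]; apply/rectP => k j; rewrite /mix.
    case: ifP => [/eqP ki|ki]; first by subst k; exact: Hi.
    by have := H k j; rewrite /mix ki.
  move=> /rectP H; split.
    by apply/rowrectP => j; have := H i j; rewrite /mix eqxx.
  apply/rectP => k j; rewrite /mix; case: ifP => // ki.
  by have := H k j; rewrite /mix ki.
apply: indep_mix => // k j; exact: atomfam_meas.
Qed.

Lemma indepF i X (phi : pred BB) : (forall k j, measurable (X k j)) ->
  pr (rowrect i (X i) `&` (projf i \o betaw) @^-1` [set g | phi g]) =
  pr (rowrect i (X i)) * pr ((projf i \o betaw) @^-1` [set g | phi g]).
Proof.
move=> mX.
have mR : measurable (rowrect i (X i)) by exact: rowrect_meas.
rewrite decomp //; last exact: fiber_proj_meas.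
rewrite -[X in _ * pr X]setTI decomp //; last exact: fiber_proj_meas.
rewrite mulr_sumr; apply: eq_bigr => g _.
by rewrite indep_fiber // setTI.
Qed.

Definition single i (j : 'I_(s i)) (A : set R) : fam := fun k j' =>
  if (existT (fun k => 'I_(s k)) k j' == existT (fun k => 'I_(s k)) i j) then A else setT.

Lemma single_meas i j A : measurable A -> forall k j', measurable (single i j A k j').
Proof. by move=> mA k j'; rewrite /single; case: ifP => _ //; exact: measurableT. Qed.

Lemma rowrect_single i j A : rowrect i (single i j A i) = P i j @^-1` A.
Proof.
apply/seteqP; split => w.
  by move=> /rowrectP H; have := H j; rewrite /single eqxx.
move=> Aw; apply/rowrectP => j'; rewrite /single eq_Tagged /=.
by case: ifP => // /eqP ->.
Qed.

Variable truenull : forall i : 'I_b, 'I_(s i) -> bool.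

Definition Wb i (be : BB) : nat := #|[set j | truenull i j && be i j]%SET|.
Definition Vb i (be : BB) : nat := (\sum_(k < b | k != i) Wb k be)%N.
Definition NN : nat := (\sum_(i < b) s i)%N.
Definition sm : nat := (\max_(i < b) s i)%N.

Lemma Vb_proj i be : Vb i (projf i be) = Vb i be.
Proof.
apply: eq_bigr => k ki; rewrite /Wb; apply: eq_card => j.
by rewrite !inE /projf ffunE (negbTE ki).
Qed.

Lemma Wb_le_sm i be : (Wb i be <= sm)%N.
Proof.
apply: (leq_trans (max_card _)); rewrite card_ord.
exact: (leq_bigmax i).
Qed.

Lemma card_split k w :
  (#|[set j : 'I_(s k) | (P k j w <= lam)%R]%SET| + #|[set j : 'I_(s k) | (lam < P k j w)%R]%SET|)%N = s k.
Proof.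
have -> : [set j : 'I_(s k) | (lam < P k j w)%R]%SET = ~: [set j | (P k j w <= lam)%R]%SET.
  by apply/setP => j; rewrite !inE ltNge.
by rewrite cardsC card_ord.
Qed.

Lemma Rc_Vb i w : (Rcount P lam w + Vb i (betaw w) <= NN)%N.
Proof.
have -> : Rcount P lam w = (\sum_(k < b) #|[set j : 'I_(s k) | (P k j w <= lam)%R]%SET|)%N.
  by apply: eq_bigr => k _; apply: eq_card => j; rewrite inE /in_mem /= /in_set asboolb.
rewrite /Vb /NN.
apply: (@leq_trans (\sum_(k < b) #|[set j : 'I_(s k) | (P k j w <= lam)%R]%SET| +
   \sum_(k < b) #|[set j : 'I_(s k) | (lam < P k j w)%R]%SET|)%N).
  rewrite leq_add2l big_mkcond /=; apply: leq_sum => k _.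
  case: ifP => _ //; rewrite /Wb; apply: subset_leq_card; apply/fintype.subsetP => j.
  by rewrite !inE /betaw !ffunE => /andP [].
by rewrite -big_split /=; apply: eq_leq; apply: eq_bigr => k _; exact: card_split.
Qed.

Lemma key_ineq (be : BB) :
  \sum_(i < b) (Wb i be)%:R / (sm + Vb i be)%:R <= (1 : R).
Proof.
set Wt := (\sum_(i < b) Wb i be)%N.
have WV i : (Wb i be + Vb i be)%N = Wt by rewrite /Wt (bigD1 i) //=.
have [Wt0|Wtp] := eqVneq Wt 0%N.
  rewrite big1 // => i _.
  have : (Wb i be <= Wt)%N by rewrite -(WV i) leq_addr.
  by rewrite Wt0 leqn0 => /eqP ->; rewrite mul0r.
have Wtp' : (0 < Wt%:R :> R) by rewrite ltr0n lt0n.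
apply: (@le_trans _ _ (\sum_(i < b) (Wb i be)%:R / Wt%:R)).
  apply: ler_sum => i _.
  have [->|Wip] := eqVneq (Wb i be) 0%N; first by rewrite !mul0r.
  apply: ler_wpM2l => //.
  rewrite lef_pV2 ?posrE //; last first.
    by rewrite ltr0n addn_gt0 (leq_trans _ (Wb_le_sm i be)) // lt0n.
  by rewrite ler_nat -(WV i) leq_add2r Wb_le_sm.
by rewrite -mulr_suml -natr_sum divff // gt_eqF.
Qed.

Lemma Vb_lt i be : (Vb i be < NN.+1)%N.
Proof.
rewrite ltnS /Vb /NN; apply: (@leq_trans (\sum_(k < b | k != i) s k)%N).
  apply: leq_sum => k _; apply: (leq_trans (max_card _)); by rewrite card_ord.
by rewrite [X in (_ <= X)%N](bigD1 i) //= leq_addl.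
Qed.

Definition pa be := pr (setT `&` betaw @^-1` [set be]).

Lemma sum_pa : \sum_(be : BB) pa be = 1.
Proof.
rewrite /pa -decomp //; last exact: fiber_betaw_meas.
by rewrite -(@pr_setT _ _ _ Pr); congr pr; apply/seteqP; split.
Qed.

Definition Hs i j v := setT `&` betaw @^-1` [set be : BB | be i j && (Vb i be == v)].

Lemma claimC : \sum_(i < b) \sum_(j < s i | truenull i j) \sum_(v < NN.+1)
   pr (Hs i j v) / (sm + v)%:R <= 1.
Proof.
have E1 i j v : pr (Hs i j v) = \sum_(be : BB | be i j && (Vb i be == v)) pa be.
  by rewrite /Hs decomp //; exact: fiber_betaw_meas.
have step i : \sum_(j < s i | truenull i j) \sum_(v < NN.+1) pr (Hs i j v) / (sm + v)%:R
    = \sum_(be : BB) pa be * ((Wb i be)%:R / (sm + Vb i be)%:R).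
  transitivity (\sum_(j < s i | truenull i j) \sum_(be : BB)
      pa be * (if be i j then (sm + Vb i be)%:R^-1 else 0)).
    apply: eq_bigr => j _.
    transitivity (\sum_(v < NN.+1) \sum_(be : BB)
        pa be * (if be i j && (Vb i be == v) then (sm + v)%:R^-1 else 0)).
      apply eq_bigr => v _; rewrite E1 mulr_suml big_mkcond /=.
      by apply eq_bigr => be _; case: ifP => _; rewrite ?mulr0.
    rewrite exchange_big /=; apply eq_bigr => be _; rewrite -mulr_sumr; congr (_ * _).
    case: (be i j) => /=; last by rewrite big1.
    rewrite (bigD1 (Ordinal (Vb_lt i be))) //= eqxx big1 ?addr0 // => v vne.
    case: eqP => // e; move: vne; suff -> : v = Ordinal (Vb_lt i be) by rewrite eqxx.
    by apply: val_inj; rewrite /= e.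
  rewrite exchange_big /=; apply eq_bigr => be _; rewrite -mulr_sumr; congr (_ * _).
  rewrite -big_mkcondr /=.
  rewrite (eq_bigl (fun j => j \in [set j | truenull i j && be i j]%SET)); last first.
    by move=> j; rewrite inE.
  by rewrite sumr_const mulr_natl.
rewrite (eq_bigr _ (fun i _ => step i)) exchange_big /=.
apply: (@le_trans _ _ (\sum_(be : BB) pa be)); last by rewrite sum_pa.
apply: ler_sum => be _; rewrite -mulr_sumr.
apply: ler_piMr; first exact: pr_ge0.
exact: key_ineq.
Qed.

Hypothesis lam0 : 0 <= lam.
Hypothesis lam1 : lam < 1.
Variable alpha : R.
Hypothesis a0 : 0 < alpha.
Hypothesis a1 : alpha < 1.
Hypothesis unif : forall i j, truenull i j -> uniform01 Pr (P i j).

Definition tv (v : nat) : R := alpha * (1 - lam) / (sm + v)%:R.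
Definition Fset i v := (projf i \o betaw) @^-1` [set g : BB | Vb i g == v].
Definition G i j v := P i j @^-1` `]-oo, tv v]%classic `&` Fset i v.

Lemma sm_gt0 i (j : 'I_(s i)) : (0 < sm)%N.
Proof.
apply: (@leq_trans (s i)); first exact: (leq_ltn_trans (leq0n j) (ltn_ord j)).
exact: (leq_bigmax i).
Qed.

Lemma tv01 i (j : 'I_(s i)) v : 0 <= tv v <= 1.
Proof.
have smp := sm_gt0 i j.
have Dp : (0 < (sm + v)%:R :> R) by rewrite ltr0n addn_gt0 smp.
have D1 : (1 <= (sm + v)%:R :> R) by rewrite ler1n addn_gt0 smp.
apply/andP; split.
  apply: divr_ge0; last exact: ltW.
  by apply: mulr_ge0; [exact: ltW | rewrite subr_ge0 ltW].
rewrite /tv ler_pdivrMr // mul1r.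
apply: (le_trans _ D1).
have h1 : alpha * (1 - lam) <= 1 * 1.
  apply: ler_pM => //; [exact: ltW | by rewrite subr_ge0 ltW | exact: ltW |].
  by rewrite lerBlDr lerDl.
by rewrite mulr1 in h1.
Qed.

Lemma Pr_le_t i j t : truenull i j -> 0 <= t <= 1 ->
  Pr (P i j @^-1` `]-oo, t]%classic) = t%:E.
Proof.
move=> tn t01; rewrite -(unif i j tn t t01); congr (Pr _).
Qed.

Lemma pr_le_t i j t : truenull i j -> 0 <= t <= 1 ->
  pr (P i j @^-1` `]-oo, t]%classic) = t.
Proof. by move=> tn t01; rewrite /pr Pr_le_t. Qed.

Lemma pr_gt i j : truenull i j -> pr (P i j @^-1` `]lam, +oo[%classic) = 1 - lam.
Proof.
move=> tn.
have -> : P i j @^-1` `]lam, +oo[%classic = ~` (P i j @^-1` `]-oo, lam]%classic).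
  apply/seteqP; split => w /=; rewrite !in_itv /= ?andbT.
    by move=> h; apply/negP; rewrite -ltNge.
  by move/negP; rewrite -ltNge.
rewrite /pr probability_setC; last by apply: preim_meas; exact: measurable_itv.
rewrite Pr_le_t // lam0 ltW //.

Qed.

Lemma Fset_meas i v : measurable (Fset i v).
Proof.
have -> : Fset i v = \big[setU/set0]_(g : BB | Vb i g == v) (projf i \o betaw) @^-1` [set g].
  apply/seteqP; split => w.
    by move=> h; apply/bigU_memP; exists (projf i (betaw w)); rewrite mem_index_enum.
  by move=> /bigU_memP [g [_ h e]]; move: h; rewrite -e.
by apply: bigU_meas => g; exact: fiber_proj_meas.
Qed.

Lemma prG i j v : truenull i j -> pr (G i j v) = tv v * pr (Fset i v).
Proof.
move=> tn; rewrite /G -(rowrect_single i j) /Fset indepF; last first.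
  by apply: single_meas; exact: measurable_itv.
by rewrite rowrect_single pr_le_t // (tv01 i j).
Qed.

Lemma H_eq i j v : P i j @^-1` `]lam, +oo[%classic `&` Fset i v = Hs i j v.
Proof.
apply/seteqP; split => w /=.
  move=> [h1 h2]; split => //=; rewrite /betaw !ffunE.
  move: h1; rewrite in_itv /= andbT => ->; by rewrite -Vb_proj.
move=> [_ /= /andP [h1 h2]]; split => /=.
  by move: h1; rewrite /betaw !ffunE in_itv /= => ->.
by rewrite /Fset /= Vb_proj.
Qed.

Lemma prH i j v : truenull i j -> pr (Hs i j v) = (1 - lam) * pr (Fset i v).
Proof.
move=> tn; rewrite -H_eq -(rowrect_single i j) /Fset indepF; last first.
  by apply: single_meas; exact: measurable_itv.
by rewrite rowrect_single pr_gt.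
Qed.

Lemma prG_H i j v : truenull i j -> pr (G i j v) = alpha * (pr (Hs i j v) / (sm + v)%:R).
Proof. by move=> tn; rewrite prG // prH // /tv !mulrA mulrAC. Qed.

Definition Rcb (be : BB) : nat := (\sum_(k < b) #|[set j | ~~ be k j]%SET|)%N.
Definition n0b be : R := (NN%:R - (Rcb be)%:R + sm%:R) / (1 - lam).

Lemma n0_eq w : n0hat P lam w = n0b (betaw w).
Proof.
rewrite /n0hat /n0b /Rcount /Rcb; congr ((_ - (_ %:R) + _) / _).
apply: eq_bigr => k _; apply: eq_card => j.
by rewrite inE /in_mem /= /in_set asboolb /betaw !ffunE -leNgt.
Qed.

Definition FS := [set w | exists i : 'I_b, exists j : 'I_(s i),
  truenull i j /\ P i j w <= alpha / n0hat P lam w].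

Lemma FS_meas : measurable FS.
Proof.
have -> : FS = \big[setU/set0]_(be : BB) (betaw @^-1` [set be] `&`
   \big[setU/set0]_(i < b) \big[setU/set0]_(j < s i | truenull i j)
      P i j @^-1` `]-oo, alpha / n0b be]%classic).
  apply/seteqP; split => w.
    move=> [i [j [tn h]]]; apply/bigU_memP; exists (betaw w).
    split; [exact: mem_index_enum | by [] |]; split => //.
    apply/bigU_memP; exists i; split; [exact: mem_index_enum | by [] |].
    apply/bigU_memP; exists j; split; [exact: mem_index_enum | by [] |].
    by rewrite /= in_itv /= -n0_eq.
  move=> /bigU_memP [be [_ _ [/= e /bigU_memP [i [_ _ /bigU_memP [j [_ tn h]]]]]]].
  exists i, j; split => //; move: h; rewrite /= in_itv /= n0_eq e.
  by [].
apply: bigU_meas => be; apply: measurableI; first exact: fiber_betaw_meas.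
apply: bigU_meas => i; apply: bigU_meas => j; apply: preim_meas.
exact: measurable_itv.
Qed.

Lemma thr w i : (0 < s i)%N -> alpha / n0hat P lam w <= tv (Vb i (betaw w)).
Proof.
move=> si.
have smp : (0 < sm)%N by apply: (leq_trans si); exact: (leq_bigmax i).
have hn := Rc_Vb i w.
set v := Vb i (betaw w) in hn *.
set Rc := Rcount P lam w in hn *.
have hR : (Rc%:R + v%:R <= NN%:R :> R) by rewrite -natrD ler_nat.
have hs : (1 <= sm%:R :> R) by rewrite ler1n.
have D2p : (0 < (sm + v)%:R :> R) by rewrite ltr0n addn_gt0 smp.
have D1p : 0 < NN%:R - Rc%:R + sm%:R :> R.
  by rewrite natrD in D2p; lra.
have qp : 0 < 1 - lam by rewrite subr_gt0.
rewrite /n0hat -/NN -/sm -/Rc invf_div mulrA /tv.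
apply: ler_wpM2l; first by apply: mulr_ge0; apply: ltW.
rewrite lef_pV2 ?posrE //.
by rewrite natrD; lra.
Qed.

Lemma FS_sub : FS `<=` \big[setU/set0]_(i < b) \big[setU/set0]_(j < s i | truenull i j)
   \big[setU/set0]_(v < NN.+1) G i j v.
Proof.
move=> w [i [j [tn h]]].
apply/bigU_memP; exists i; split; [exact: mem_index_enum | by [] |].
apply/bigU_memP; exists j; split; [exact: mem_index_enum | by [] |].
apply/bigU_memP; exists (Ordinal (Vb_lt i (betaw w))).
split; [exact: mem_index_enum | by [] |]; split.
  rewrite /= in_itv /=; apply: (le_trans h); apply: thr.
  exact: (leq_ltn_trans (leq0n j) (ltn_ord j)).
by rewrite /Fset /= Vb_proj.
Qed.

Lemma G_meas i j v : measurable (G i j v).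
Proof.
apply: measurableI; last exact: Fset_meas.
by apply: preim_meas; exact: measurable_itv.
Qed.

Lemma main_bound : pr FS <= alpha.
Proof.
have mB : measurable (\big[setU/set0]_(i < b) \big[setU/set0]_(j < s i | truenull i j)
   \big[setU/set0]_(v < NN.+1) G i j v).
  by apply: bigU_meas => i; apply: bigU_meas => j; apply: bigU_meas => v; exact: G_meas.
apply: (le_trans (pr_mono Pr FS_meas mB FS_sub)).
have mBi : forall i, measurable (\big[setU/set0]_(j < s i | truenull i j)
   \big[setU/set0]_(v < NN.+1) G i j v).
  by move=> i; apply: bigU_meas => j; apply: bigU_meas => v; exact: G_meas.
apply: (le_trans (pr_bigU_le Pr _ _ mBi)).
apply: (@le_trans _ _ (\sum_(i < b) \sum_(j < s i | truenull i j)
    \sum_(v < NN.+1) pr (G i j v))).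
  apply: ler_sum => i _.
  have mBj : forall j, measurable (\big[setU/set0]_(v < NN.+1) G i j v).
    by move=> j; apply: bigU_meas => v; exact: G_meas.
  apply: (le_trans (pr_bigU_le Pr _ _ mBj)).
  apply: ler_sum => j _.
  exact: (pr_bigU_le Pr _ _ (fun v : 'I_NN.+1 => G_meas i j v)).
have -> : \sum_(i < b) \sum_(j < s i | truenull i j) \sum_(v < NN.+1) pr (G i j v) =
    alpha * \sum_(i < b) \sum_(j < s i | truenull i j) \sum_(v < NN.+1)
      pr (Hs i j v) / (sm + v)%:R.
  rewrite mulr_sumr; apply eq_bigr => i _; rewrite mulr_sumr; apply eq_bigr => j tn.
  by rewrite mulr_sumr; apply eq_bigr => v _; rewrite prG_H.
rewrite -[X in _ <= X]mulr1; apply: ler_wpM2l; first exact: ltW.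
exact: claimC.
Qed.

End Model.

Theorem mainTheorem6 (d : measure_display) (T : measurableType d)
  (R : realType) (Pr : probability T R)
  (b : nat) (s : 'I_b -> nat)
  (P : forall i : 'I_b, 'I_(s i) -> T -> R)
  (truenull : forall i : 'I_b, 'I_(s i) -> bool)
  (alpha lam : R) :
  (forall i j, measurable_fun [set: T] (P i j)) ->
  (forall i j, truenull i j -> uniform01 Pr (P i j)) ->
  rows_independent Pr P ->
  0 < alpha < 1 ->
  ((2 * b + 3)%:R `^ (- (2 / (b + 2)%:R)) <= lam) -> lam < 1 ->
  (FWER Pr P truenull alpha lam <= alpha%:E)%E.
Proof.
move=> mP unif indep /andP [a0 a1] hlam lam1.
have lam0 : 0 <= lam by apply: le_trans hlam; exact: powR_ge0.
have mFS := @FS_meas _ _ _ _ _ _ mP lam truenull alpha.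
rewrite /FWER (prE _ _ _ Pr _ mFS) lee_fin.
exact: (@main_bound _ _ _ Pr _ _ _ mP indep lam truenull lam0 lam1 alpha a0 a1 unif).
Qed.
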